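(* Let $f$ and $g$ be transcendental entire functions. If $z_0\in BU(f\circ g)$, then $g(z_0)\in BU(g\circ f)$.
   Context: For an entire function $F$, $F^n$ denotes the $n$-th iterate. The escaping set is $I(F)=\{z: F^n(z)\to\infty\}$, $K(F)=\{z: \exists R>0,\ |F^n(z)|\le R\ \forall n\ge0\}$, and the Bungee set is $BU(F)=\mathbb{C}\setminus(I(F)\cup K(F))$. *)

(* Defs.v *)
From Stdlib Require Import Reals.
From Coquelicot Require Import Coquelicot.
Open Scope R_scope.

Definition entire (f : C -> C) : Prop :=
  forall z : C, @ex_derive C_AbsRing C_NormedModule f z.

Fixpoint cpow (z : C) (k : nat) : C :=
  match k with O => RtoC 1 | S k' => Cmult z (cpow z k') end.

Fixpoint poly_eval (a : nat -> C) (n : nat) (z : C) : C :=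
  match n with
  | O => a O
  | S n' => Cplus (poly_eval a n' z) (Cmult (a n) (cpow z n))
  end.

Definition is_polynomial (f : C -> C) : Prop :=
  exists (a : nat -> C) (n : nat), forall z, f z = poly_eval a n z.

Definition transcendental_entire (f : C -> C) : Prop :=
  entire f /\ ~ is_polynomial f.

Definition iter (F : C -> C) (n : nat) (z : C) : C := Nat.iter n F z.

Definition escaping (F : C -> C) (z : C) : Prop :=
  forall M : R, exists N : nat, forall n, (N <= n)%nat -> M < Cmod (iter F n z).

Definition bounded_orbit (F : C -> C) (z : C) : Prop :=
  exists R0 : R, 0 < R0 /\ forall n : nat, Cmod (iter F n z) <= R0.

Definition bungee (F : C -> C) (z : C) : Prop :=
  ~ escaping F z /\ ~ bounded_orbit F z.

(* Main.v *)
Require Import Defs.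
From Stdlib Require Import Reals Lra Lia ClassicalEpsilon Classical.
From Coquelicot Require Import Coquelicot.
Open Scope R_scope.

Lemma sqrt2_le2 : sqrt 2 <= 2.
Proof. pose proof (sqrt_pos 2). pose proof (pow2_sqrt 2). nra. Qed.

Lemma cmod_small (u v : C) : Rabs (fst u - fst v) < 1 -> Rabs (snd u - snd v) < 1 ->
  Cmod u <= Cmod v + 2.
Proof.
  intros H1 H2.
  assert (E : u = Cplus v (Cminus u v)).
  { destruct u, v; unfold Cplus, Cminus, Copp; simpl; f_equal; ring. }
  rewrite E at 1. eapply Rle_trans. apply Cmod_triangle.
  apply Rplus_le_compat_l.
  eapply Rle_trans. apply Cmod_2Rmax.
  assert (Rmax (Rabs (fst (u - v)%C)) (Rabs (snd (u - v)%C)) <= 1).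
  { destruct u, v; simpl in *. unfold Rminus in *. apply Rmax_lub; apply Rlt_le; assumption. }
  pose proof sqrt2_le2. pose proof (sqrt_pos 2). nra.
Qed.

Definition ccont (h : C -> C) := forall z, @continuous (AbsRing_UniformSpace C_AbsRing) C_NormedModule h z.

Lemma cont_ball (h:C->C) (Hc: ccont h) (t : C) :
  exists d:posreal, forall y:C, Rabs (fst y - fst t) < d -> Rabs (snd y - snd t) < d ->
   Cmod (h y) <= Cmod (h t) + 2 /\ Cmod (h t) <= Cmod (h y) + 2.
Proof.
  pose proof (Hc t) as H.
  apply filterlim_locally with (eps := mkposreal 1 Rlt_0_1) in H.
  destruct H as [d Hd]. exists (pos_div_2 d). intros y H1 H2.
  destruct (Hd y) as [B1 B2].
  { change (Cmod (Cminus y t) < d).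
    eapply Rle_lt_trans. apply Cmod_2Rmax.
    assert (Rmax (Rabs (fst (y - t)%C)) (Rabs (snd (y - t)%C)) < d / 2).
    { destruct y, t; simpl in *. unfold Rminus in *. apply Rmax_lub_lt; assumption. }
    pose proof sqrt2_le2. pose proof (sqrt_pos 2). pose proof (cond_pos d).
    pose proof (Rmax_l (Rabs (fst (y - t)%C)) (Rabs (snd (y - t)%C))).
    pose proof (Rabs_pos (fst (y - t)%C)). nra. }
  split; apply cmod_small; try assumption;
  rewrite Rabs_minus_sym; assumption.
Qed.

Lemma abs_inv (a b : R) : Rabs a <= b -> - b <= a <= b.
Proof. unfold Rabs; destruct (Rcase_abs a); intros; lra. Qed.

Lemma step (h:C->C) (Hc: ccont h) (R':R) :
  exists d:posreal, forall x x' : C, Rabs (fst x) <= R' -> Rabs (snd x) <= R' ->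
   Rabs (fst x' - fst x) < d -> Rabs (snd x' - snd x) < d ->
   Cmod (h x') <= Cmod (h x) + 4.
Proof.
  assert (X : forall t : Compactness.Tn 2 R, {d : posreal | forall y:C,
     Rabs (fst y - fst t) < d -> Rabs (snd y - fst (snd t)) < d ->
     Cmod (h y) <= Cmod (h (fst t, fst (snd t))) + 2 /\
     Cmod (h (fst t, fst (snd t))) <= Cmod (h y) + 2}).
  { intro t. apply constructive_indefinite_description.
    exact (cont_ball h Hc (fst t, fst (snd t))). }
  set (delta := fun t => pos_div_2 (proj1_sig (X t))).
  destruct (compactness_value 2 (-R', (-R', tt)) (R', (R', tt)) delta) as [d Hd].
  exists d. intros x x' Hx1 Hx2 D1 D2.
  apply NNPP. intro Hn.
  apply (Hd (fst x, (snd x, tt))).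
  { simpl. split. apply abs_inv; auto. split. apply abs_inv; auto. exact I. }
  intros [t [_ [Hcl Hdl]]].
  apply Hn. destruct t as [t1 [t2 []]]. simpl in Hcl. destruct Hcl as [C1 [C2 _]].
  unfold delta in *. simpl in *.
  destruct (X (t1, (t2, tt))) as [e He]. simpl in *.
  destruct (He x') as [A1 _].
  { replace (fst x' - t1) with ((fst x' - fst x) + (fst x - t1)) by ring.
    eapply Rle_lt_trans. apply Rabs_triang. lra. }
  { replace (snd x' - t2) with ((snd x' - snd x) + (snd x - t2)) by ring.
    eapply Rle_lt_trans. apply Rabs_triang. lra. }
  destruct (He x) as [_ A2]; try lra.
  pose proof (cond_pos e); lra. pose proof (cond_pos e); lra.
Qed.

Lemma abs_scale (c a : R) : 0 <= c <= 1 -> Rabs (c * a) <= Rabs a.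
Proof. intros. rewrite Rabs_mult, (Rabs_pos_eq c) by lra.
  pose proof (Rabs_pos a). nra. Qed.

Lemma bounded_disc (h:C->C) (Hc: ccont h) (R0:R) :
  exists B, forall w : C, Cmod w <= R0 -> Cmod (h w) <= B.
Proof.
  set (R' := Rabs R0).
  destruct (step h Hc R') as [d Hd].
  pose proof (cond_pos d) as dpos.
  assert (Hq : 0 <= R' / d). { unfold R'. apply Rdiv_le_0_compat. apply Rabs_pos. lra. }
  destruct (nfloor_ex _ Hq) as [n Hn].
  set (N := S n).
  assert (HN : R' < d * INR N).
  { unfold N. rewrite S_INR. apply Rmult_lt_reg_r with (/ d). apply Rinv_0_lt_compat; lra.
    replace (d * (INR n + 1) * / d) with (INR n + 1) by (field; lra). unfold Rdiv in Hn. lra. }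
  assert (Npos : 0 < INR N) by (unfold N; apply lt_0_INR; lia).
  exists (Cmod (h (0,0)) + 4 * INR N).
  intros w Hw.
  pose proof (Rmax_Cmod w) as Hm.
  assert (Ha : Rabs (fst w) <= R') by (unfold R'; pose proof (Rmax_l (Rabs (fst w)) (Rabs (snd w))); pose proof (Rle_abs R0); lra).
  assert (Hb : Rabs (snd w) <= R') by (unfold R'; pose proof (Rmax_r (Rabs (fst w)) (Rabs (snd w))); pose proof (Rle_abs R0); lra).
  set (c := fun k : nat => INR k / INR N).
  assert (Hc01 : forall k, (k <= N)%nat -> 0 <= c k <= 1).
  { intros k Hk. unfold c. split. apply Rdiv_le_0_compat; [apply pos_INR|lra].
    apply le_INR in Hk. apply Rmult_le_reg_r with (INR N); auto.
    replace (INR k / INR N * INR N) with (INR k) by (field; lra). lra. }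
  assert (Hdiff : forall a, Rabs a <= R' -> forall k, Rabs (c (S k) * a - c k * a) < d).
  { intros a Ha' k. unfold c. rewrite S_INR.
    replace ((INR k + 1) / INR N * a - INR k / INR N * a) with (a / INR N) by (field; lra).
    unfold Rdiv. rewrite Rabs_mult, Rabs_inv, (Rabs_pos_eq (INR N)) by lra.
    apply Rmult_lt_reg_r with (INR N); auto.
    replace (Rabs a * / INR N * INR N) with (Rabs a) by (field; lra). lra. }
  assert (Key : forall k, (k <= N)%nat -> Cmod (h (c k * fst w, c k * snd w)) <= Cmod (h (0,0)) + 4 * INR k).
  { induction k as [|k IH]; intros Hk.
    - unfold c. rewrite INR_0. replace (0 / INR N * fst w) with 0 by (field; lra).
      replace (0 / INR N * snd w) with 0 by (field; lra). lra.
    - assert (IH' := IH ltac:(lia)). rewrite S_INR.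
      pose proof (Hd (c k * fst w, c k * snd w) (c (S k) * fst w, c (S k) * snd w)) as Hs.
      simpl in Hs.
      assert (H1 := Hc01 k ltac:(lia)).
      assert (Cmod (h (c (S k) * fst w, c (S k) * snd w)) <= Cmod (h (c k * fst w, c k * snd w)) + 4).
      { apply Hs. eapply Rle_trans. apply abs_scale; auto. auto.
        eapply Rle_trans. apply abs_scale; auto. auto.
        apply Hdiff; auto. apply Hdiff; auto. }
      lra. }
  specialize (Key N (le_n N)).
  replace (c N * fst w, c N * snd w) with w in Key.
  2:{ unfold c. replace (INR N / INR N) with 1 by (field; lra). destruct w; simpl; f_equal; ring. }
  assert (0 <= INR N) by lra. lra.
Qed.

Lemma entire_cont (f : C -> C) : entire f -> ccont f.
Proof. intros H z. exact (@ex_derive_continuous C_AbsRing C_NormedModule f z (H z)). Qed.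

Lemma iter_comm (f g : C -> C) (z0 : C) n :
  iter (fun z => g (f z)) n (g z0) = g (iter (fun z => f (g z)) n z0).
Proof. induction n; simpl; auto. unfold iter in *. simpl. rewrite IHn. reflexivity. Qed.

Theorem theorem8 (f g : C -> C) :
  transcendental_entire f -> transcendental_entire g ->
  forall z0 : C, bungee (fun z => f (g z)) z0 -> bungee (fun z => g (f z)) (g z0).
Proof.
  intros [Ef _] [Eg _] z0 [Hne Hnb].
  pose proof (entire_cont f Ef) as Cf. pose proof (entire_cont g Eg) as Cg.
  split.
  - intro Hesc. apply Hne. intro M.
    destruct (bounded_disc g Cg M) as [B HB].
    destruct (Hesc B) as [N HN]. exists N. intros n Hn.
    specialize (HN n Hn). rewrite iter_comm in HN.
    destruct (Rlt_or_le M (Cmod (iter (fun z => f (g z)) n z0))) as [H|H]; auto.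
    specialize (HB _ H). lra.
  - intros [R0 [HR0 Hb]]. apply Hnb.
    destruct (bounded_disc f Cf R0) as [B HB].
    exists (Rmax (Rmax (Cmod z0) B) 1). split.
    { eapply Rlt_le_trans. apply Rlt_0_1. apply Rmax_r. }
    intros [|n].
    + simpl. eapply Rle_trans. apply Rmax_l. apply Rmax_l.
    + specialize (Hb n). rewrite iter_comm in Hb.
      change (Cmod (f (g (iter (fun z => f (g z)) n z0))) <= Rmax (Rmax (Cmod z0) B) 1).
      eapply Rle_trans. apply HB; exact Hb.
      eapply Rle_trans. apply Rmax_r. apply Rmax_l.
Qed.
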